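(* Let $\Sigma=(X,U,F)$ be a system, $Q\subset X$ a controlled invariant set, and $(\mathcal{A},G)$ a quasi-invariant-partition of $Q$. Then \[h_{inv}(\mathcal{A},G)=\overline{w}^*(\mathcal{A},G),\] where $\overline{w}^*(\mathcal{A},G)$ is the maximum mean weight.
   Context: A system is a triple $\Sigma=(X,U,F)$ where $X,U$ are nonempty sets and $F:X\times U\rightrightarrows X$ is a set-valued map with $F(x,u)\neq\emptyset$ for all $(x,u)$; for $A\subset X$, $F(A,u)=\bigcup_{x\in A}F(x,u)$. $Q\subset X$ is controlled invariant if for every $x\in Q$ there is $u\in U$ with $F(x,u)\subset Q$. An invariant cover of $Q$ is a pair $(\mathcal{A},G)$ where $\mathcal{A}$ is a finite cover of $Q$ (by subsets of $Q$) and $G:\mathcal{A}\to U$ satisfies $F(A,G(A))\subset Q$ for all $A\in\mathcal{A}$. For $\mathcal{S}\subset\mathcal{A}^n$, $\alpha=\alpha(0)\cdots\alpha(n-1)\in\mathcal{S}$ and integer $0\le t<n-1$, let $P(\alpha|_{[0,t]})=\{A\in\mathcal{A}:\exists\hat\alpha\in\mathcal{S},\ \hat\alpha|_{[0,t]}=\alpha|_{[0,t]},\ A=\hat\alpha(t+1)\}$, and $P(\alpha|_{[0,n-1]})=P(\alpha)=\{\hat\alpha(0):\hat\alpha\in\mathcal{S}\}$. $\mathcal{S}$ is $(n,Q)$-spanning in $(\mathcal{A},G)$ if (1) the elements of $P(\alpha)$ cover $Q$, and (2) for every $\alpha\in\mathcal{S}$ and $0\le t<n-1$, $F(\alpha(t),G(\alpha(t)))\subset\bigcup_{A'\in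 P(\alpha|_{[0,t]})}A'$. Let $N(\mathcal{S})=\max_{\alpha\in\mathcal{S}}\prod_{t=0}^{n-1}\sharp P(\alpha|_{[0,t]})$, $r_{inv}(n,Q,\mathcal{A},G)=\min\{N(\mathcal{S}):\mathcal{S}\ (n,Q)\text{-spanning in }(\mathcal{A},G)\}$, and $h_{inv}(\mathcal{A},G)=\lim_{n\to\infty}\frac1n\log r_{inv}(n,Q,\mathcal{A},G)$ ($\log$ base $2$). For $A\in\mathcal{A}$: $D(A)=\{A'\in\mathcal{A}:F(A,G(A))\cap A'\neq\emptyset\}$ and $w(A)=\log\sharp D(A)$. A sequence $(A_i)$ in $\mathcal{A}$ is admissible if $F(A_i,G(A_i))\cap A_{i+1}\neq\emptyset$ for all consecutive indices. A finite sequence $c=(A_i)_{i=0}^{k-1}$ is an irreducible sequence of period $k$ if the infinite sequence $ccc\cdots$ is admissible and $A_i\neq A_j$ for $i\neq j$; its mean weight is $\overline{w}(c)=\frac1k\sum_{i=0}^{k-1}w(A_i)$, and $\overline{w}^*(\mathcal{A},G)=\max_c\overline{w}(c)$ over all irreducible periodic sequences $c$. An invariant cover $(\mathcal{A},G)$ is a quasi-invariant-partition of $Q$ if $A\setminus\bigcup_{B\in\mathcal{A},B\neq A}B\neq\emptyset$ for all $A\in\mathcal{A}$, and $F(A,G(A))\cap\big(B\setminus\bigcup_{C\in D(A),C\neq B}C\big)\neq\emptyset$ for all $A\in\mathcal{A}$ and $B\in D(A)$. *)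

(* Defs.v *)
From HB Require Import structures.
From mathcomp Require Import all_boot all_order all_algebra.
From mathcomp Require Import all_classical all_reals.
From mathcomp Require Import exp sequences topology normedtype.

Set Implicit Arguments.
Unset Strict Implicit.
Unset Printing Implicit Defensive.

Import Order.TTheory GRing.Theory Num.Theory.
Import numFieldNormedType.Exports.

Local Open Scope classical_set_scope.

Section InvEntropy.
Variables (X U : Type) (F : X -> U -> set X).

Definition Fimg (A : set X) (u : U) : set X :=
  [set y | exists x, A x /\ F x u y].

Definition is_system : Prop :=
  inhabited X /\ inhabited U /\ (forall x u, exists y, F x u y).

Definition controlled_invariant (Q : set X) : Prop :=
  forall x, Q x -> exists u, F x u `<=` Q.

(* A finite cover is represented by an injective family cov : I -> set X
   indexed by a finite type I; G : I -> U is the control assignment. *)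
Variables (Q : set X) (I : finType) (cov : I -> set X) (G : I -> U).

Definition invariant_cover : Prop :=
  injective cov /\
  (forall A, cov A `<=` Q) /\
  (Q `<=` [set x | exists A, cov A x]) /\
  (forall A, Fimg (cov A) (G A) `<=` Q).

Definition adm : rel I :=
  fun A B => `[< exists y, Fimg (cov A) (G A) y /\ cov B y >].

Definition Dset (A : I) : {set I} := finset (fun B => adm A B).

Definition quasi_invariant_partition : Prop :=
  invariant_cover /\
  (forall A, exists x, cov A x /\ forall B, B != A -> ~ cov B x) /\
  (forall A B, B \in Dset A ->
     exists y, Fimg (cov A) (G A) y /\ cov B y /\
       forall C, C \in Dset A -> C != B -> ~ cov C y).

Definition Pset (n : nat) (S : {set n.-tuple I}) (alpha : n.-tuple I)
    (t : 'I_n) : {set I} :=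
  if t.+1 < n then
    finset (fun A => [exists beta in S,
       (take t.+1 beta == take t.+1 alpha) && (onth beta t.+1 == Some A)])
  else finset (fun A => [exists beta in S, onth beta 0 == Some A]).

Definition P0set (n : nat) (S : {set n.-tuple I}) : {set I} :=
  finset (fun A => [exists beta in S, onth beta 0 == Some A]).

Definition spanning (n : nat) (S : {set n.-tuple I}) : Prop :=
  (Q `<=` [set x | exists2 A, A \in P0set S & cov A x]) /\
  (forall alpha, alpha \in S -> forall t : 'I_n, t.+1 < n ->
     Fimg (cov (tnth alpha t)) (G (tnth alpha t))
       `<=` [set x | exists2 A, A \in Pset S alpha t & cov A x]).

Definition spanningb (n : nat) (S : {set n.-tuple I}) : bool :=
  `[< spanning S >].

Definition Nval (n : nat) (S : {set n.-tuple I}) : nat :=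
  \max_(alpha in S) \prod_(t < n) #|Pset S alpha t|.

(* The full set
   [set: n.-tuple I] is always (n,Q)-spanning for an invariant cover, so
   N([set: _]) is a legitimate neutral element for this minimum. *)
Definition r_inv (n : nat) : nat :=
  \big[minn/Nval [set: n.-tuple I]]_(S : {set n.-tuple I} | spanningb S) Nval S.

Variable R : realType.
Local Open Scope ring_scope.

Definition log2 (x : R) : R := ln x / ln 2.

Definition weight (A : I) : R := log2 (#|Dset A|%:R).

(* irreducible periodic sequence: nonempty, pairwise distinct, c c c ... admissible *)
Definition irreducible_seq (c : seq I) : Prop :=
  c != [::] /\ uniq c /\ cycle adm c.

Definition mean_weight (c : seq I) : R :=
  (\sum_(A <- c) weight A) / (size c)%:R.

Definition is_max_mean_weight (w : R) : Prop :=
  (exists c, irreducible_seq c /\ mean_weight c = w) /\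
  (forall c, irreducible_seq c -> mean_weight c <= w).

Definition h_inv_is (w : R) : Prop :=
  (fun n : nat => (n%:R)^-1 * log2 (r_inv n)%:R) @ \oo --> w.

End InvEntropy.

(* Main.v *)
Require Import Defs.
From HB Require Import structures.
From mathcomp Require Import all_boot all_order all_algebra.
From mathcomp Require Import all_classical all_reals.
From mathcomp Require Import exp sequences topology normedtype.
From mathcomp Require Import lra zify.
Import Order.TTheory GRing.Theory Num.Theory.
Import numFieldNormedType.Exports.
Local Open Scope classical_set_scope.
Local Open Scope ring_scope.

Lemma split_first (T : eqType) (y : T) (s : seq T) : y \in s ->
  exists a b, s = a ++ y :: b /\ y \notin a.
Proof.
elim: s => // z s IH; rewrite in_cons; case: (eqVneq y z) => [-> _ | ne /= ys].
  by exists [::], s.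
have [a [b [-> na]]] := IH ys; exists (z :: a), b; split => //.
by rewrite in_cons negb_or ne.
Qed.

Lemma decomp (T : eqType) (s : seq T) : ~~ uniq s ->
  exists p x c r, s = p ++ x :: c ++ x :: r /\ uniq (x :: c).
Proof.
elim: s => // a s IH /=; case Hu: (uniq s).
  rewrite andbT negbK => /split_first [c [r [e nc]]].
  exists [::], a, c, r; split; first by rewrite e.
  by move: Hu; rewrite e cat_uniq /= nc => /andP [->].
move=> _; have [p [x [c [r [e u]]]]] := IH (negbT Hu).
by exists (a :: p), x, c, r; rewrite e.
Qed.

Lemma path_decomp (T : Type) (e : rel T) z p x c r :
  path e z (p ++ x :: c ++ x :: r) -> path e z (p ++ x :: r) && cycle e (x :: c).
Proof.
rewrite !cat_path /= cat_path /= rcons_path.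
by case/and5P => -> -> -> -> ->.
Qed.

Lemma sorted_decomp (T : Type) (e : rel T) p x c r :
  sorted e (p ++ x :: c ++ x :: r) -> sorted e (p ++ x :: r) && cycle e (x :: c).
Proof.
case: p => [|a p] /=; last exact: path_decomp.
rewrite cat_path /= rcons_path; by case/and3P => -> -> ->.
Qed.

Lemma exists_max (T : eqType) (R : realType) (L : seq T) (f : T -> R) : L != [::] ->
  exists2 x, x \in L & forall y, y \in L -> f y <= f x.
Proof.
elim: L => // a L IH _; case: (eqVneq L [::]) => [-> | ne].
  by exists a => [|y]; rewrite ?mem_seq1 // => /eqP ->.
have [b bL Hb] := IH ne; case: (lerP (f a) (f b)) => H.
  exists b; first by rewrite in_cons bL orbT.
  by move=> y; rewrite in_cons => /orP [/eqP -> // | /Hb].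
exists a; first by rewrite mem_head.
move=> y; rewrite in_cons => /orP [/eqP -> // | /Hb Hy].
exact: le_trans Hy (ltW H).
Qed.

Fixpoint allseqs (T : finType) (N : nat) : seq (seq T) :=
  if N is N'.+1 then [::] :: [seq a :: s | a <- enum T, s <- allseqs T N'] else [:: [::]].

Lemma mem_allseqs (T : finType) N (s : seq T) : (size s <= N)%N -> s \in allseqs T N.
Proof.
elim: N s => [|N IH] [|a s] //= le; rewrite ?mem_head // in_cons /=.
by apply: (allpairs_f (fun a s => a :: s)); rewrite ?mem_enum //; apply: IH.
Qed.
Section Comb.
Variables (R : realType) (X U : Type) (F : X -> U -> set X) (Q : set X) (I : finType)
  (cov : I -> set X) (G : I -> U).
Hypothesis HF : forall x u, exists y, F x u y.
Hypothesis HQ : quasi_invariant_partition F Q cov G.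

Local Notation adm := (adm F cov G).
Local Notation D := (Dset F cov G).

Lemma admP A B : reflect (exists y, Fimg F (cov A) (G A) y /\ cov B y) (adm A B).
Proof. exact: asboolP. Qed.

Lemma inD A B : (B \in D A) = adm A B.
Proof. by rewrite /Dset inE. Qed.

Lemma adm_succ A : exists B, adm A B.
Proof.
case: HQ => [[_ [covQ [Qcov FQ]]] [priv _]].
case: (priv A) => x [Ax _]; case: (HF x (G A)) => y Fy.
have Fi : Fimg F (cov A) (G A) y by exists x.
case: (Qcov y (FQ A y Fi)) => B By; exists B; apply/admP; exists y; by split.
Qed.

Definition sucf A := odflt A [pick B | adm A B].
Lemma adm_sucf A : adm A (sucf A).
Proof.
rewrite /sucf; case: pickP => [B //|H].
by case: (adm_succ A) => B HB; have := H B; rewrite HB.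
Qed.

Lemma D_gt0 A : (0 < #|D A|)%N.
Proof. by apply/card_gt0P; exists (sucf A); rewrite inD adm_sucf. Qed.

Lemma sorted_nth (s : seq I) x0 i : sorted adm s -> (i.+1 < size s)%N ->
  adm (nth x0 s i) (nth x0 s i.+1).
Proof.
case: s => [//|a s] /= /(pathP x0) H lt; exact: H.
Qed.

Lemma onth_nthE (s : seq I) x0 i : (i < size s)%N -> onth s i = Some (nth x0 s i).
Proof. by elim: s i => [|a s IH] [|i] //= lt; apply: IH. Qed.

Lemma path_traject z k : path adm z (traject sucf (sucf z) k).
Proof.
apply: (sub_path _ (fpath_traject sucf z k)) => x y /eqP <-; exact: adm_sucf.
Qed.

Lemma ext_prop n (p : seq I) : (0 < size p <= n)%N ->
  exists β : n.-tuple I, take (size p) β = p /\ (sorted adm p -> sorted adm β).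
Proof.
case: p => [//|a p'] /andP [_ le].
set s := (a :: p') ++ traject sucf (sucf (last a p')) (n - size (a :: p')).
have Hs : size s == n by rewrite size_cat size_traject subnKC.
exists (Tuple Hs); split; first by rewrite /= take_size_cat.
rewrite /= => Hp; rewrite /s /= cat_path Hp /=; exact: path_traject.
Qed.

Lemma take_rcons_eq (s : seq I) B k : size s = k -> take k (rcons s B) = s.
Proof. by move=> e; rewrite -cats1 take_size_cat. Qed.

Lemma span_suff n (S : {set n.-tuple I}) :
 (forall A, exists2 β, β \in S & onth β 0 = Some A) ->
 (forall α, α \in S -> forall t : 'I_n, (t.+1 < n)%N -> forall B, adm (tnth α t) B ->
    exists2 β, β \in S & take t.+1 β = take t.+1 α /\ onth β t.+1 = Some B) ->
 spanning F Q cov G S.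
Proof.
case: HQ => [[_ [covQ [Qcov FQ]]] _] H1 H2; split.
- move=> x Qx; case: (Qcov x Qx) => A Ax; exists A => //.
  rewrite inE; case: (H1 A) => β Hb e; by apply/exists_inP; exists β => //; rewrite e.
- move=> α Hα t lt y Fy; case: (Qcov y (FQ _ y Fy)) => B By; exists B => //.
  rewrite /Pset lt inE.
  have Ha : adm (tnth α t) B by apply/admP; exists y.
  case: (H2 α Hα t lt B Ha) => β Hb [e1 e2].
  by apply/exists_inP; exists β => //; rewrite e1 e2 !eqxx.
Qed.

Definition Sadm n : {set n.-tuple I} := [set α : n.-tuple I | sorted adm α].

Lemma ext_rcons n (α : n.-tuple I) (t : 'I_n) B : (t.+1 < n)%N ->
  exists β : n.-tuple I, [/\ take t.+1 β = take t.+1 α, onth β t.+1 = Some B &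
     (sorted adm α -> adm (tnth α t) B -> sorted adm β)].
Proof.
move=> lt; set p := rcons (take t.+1 α) B.
have sz : size (take t.+1 α) = t.+1 by rewrite size_takel // size_tuple ltnW.
have szp : size p = t.+2 by rewrite size_rcons sz.
have Hp : (0 < size p <= n)%N by rewrite szp.
have [β [e1 e2]] := @ext_prop n p Hp.
exists β; split.
- by rewrite -(take_takel _ (leqnSn t.+1)) -szp e1 take_rcons_eq.
- rewrite (onth_nthE _ B) ?size_tuple //.
  by rewrite -(nth_take _ (ltnSn t.+1)) -szp e1 nth_rcons sz ltnn eqxx.
- move=> sa adm1; apply: e2; rewrite /p.
  have st := take_sorted t.+1 sa.
  rewrite (take_nth B) ?size_tuple ?(ltnW lt) // in st *.
  case: (take t α) st => [|a l] /=; first by rewrite (tnth_nth B) in adm1; rewrite adm1.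
  rewrite !rcons_path => /andP [-> ->] /=; rewrite last_rcons -(tnth_nth B); exact adm1.
Qed.

Lemma ext_first n (A : I) : (0 < n)%N -> exists2 β : n.-tuple I, sorted adm β & onth β 0 = Some A.
Proof.
move=> n0; have Hp : (0 < size [:: A] <= n)%N by rewrite /= n0.
have [β [e1 e2]] := @ext_prop n [:: A] Hp.
exists β; first exact: e2.
rewrite (onth_nthE _ A) ?size_tuple // -(nth_take _ (ltnSn 0)) e1 //.
Qed.

Lemma span_Sadm n : (0 < n)%N -> spanning F Q cov G (Sadm n).
Proof.
move=> n0; apply: span_suff.
- move=> A; have [β sb e] := @ext_first n A n0; exists β => //; by rewrite inE.
- move=> α; rewrite inE => sa t lt B ab.
  have [β [e1 e2 e3]] := @ext_rcons n α t B lt.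
  by exists β; [rewrite inE; exact: e3 | split].
Qed.

Lemma span_full n : (0 < n)%N -> spanning F Q cov G [set: n.-tuple I].
Proof.
move=> n0; apply: span_suff.
- move=> A; have [β sb e] := @ext_first n A n0; by exists β.
- move=> α _ t lt B ab; have [β [e1 e2 e3]] := @ext_rcons n α t B lt; by exists β.
Qed.


Lemma spanD n (S : {set n.-tuple I}) β (t : 'I_n) : spanning F Q cov G S -> β \in S ->
  (t.+1 < n)%N -> D (tnth β t) \subset Pset S β t.
Proof.
move=> [_ sp2] Hb lt; apply/fintype.subsetP => B HB.
case: HQ => _ [_ priv]; case: (priv _ _ HB) => y [Fy [By Hpriv]].
case: (sp2 β Hb t lt y Fy) => A HA Ay.
have AD : A \in D (tnth β t) by rewrite inD; apply/admP; exists y.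
case: (eqVneq A B) => [<- //| neq]; by case: (Hpriv A AD neq).
Qed.

Lemma adm_in_span m (S : {set (m.+1).-tuple I}) (α : (m.+1).-tuple I) :
  spanning F Q cov G S -> sorted adm α -> α \in S.
Proof.
move=> Hsp sa.
have a : I := tnth α ord0.
have H : forall k, (k < m.+1)%N -> exists2 β, β \in S & take k.+1 β = take k.+1 α.
  elim => [_ | k IH lt].
  - case: HQ => [[_ [covQ _]] [priv _]].
    case: (priv (tnth α ord0)) => x [ax Hx].
    case: Hsp => [sp1 _]; case: (sp1 x (covQ _ x ax)) => A HA Ax.
    have eA : A = tnth α ord0.
      by apply/eqP; apply: contraT => ne; case: (Hx A ne Ax).
    rewrite inE in HA; case/exists_inP: HA => β Hb /eqP oβ.
    exists β => //; rewrite !(take_nth a) ?size_tuple // !take0 /=.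
    by rewrite (@onth_nth _ a _ _ _ oβ) eA (tnth_nth a).
  - case: (IH (ltnW lt)) => β Hb Htk.
    pose t : 'I_(m.+1) := Ordinal (ltnW lt).
    have HD := @spanD _ S β t Hsp Hb lt.
    have eb : nth a β k = nth a α k.
      by rewrite -(nth_take _ (ltnSn k)) Htk nth_take.
    have ad : adm (tnth β t) (nth a α k.+1).
      by rewrite (tnth_nth a) /= eb; apply: sorted_nth => //; rewrite size_tuple.
    move/fintype.subsetP: HD => /(_ (nth a α k.+1)); rewrite inD => /(_ ad).
    rewrite /Pset lt inE => /exists_inP [γ Hg /andP [/eqP e1 /eqP e2]].
    exists γ => //.
    rewrite (take_nth a) ?size_tuple // [RHS](take_nth a) ?size_tuple //.
    by rewrite e1 Htk (@onth_nth _ a _ _ _ e2).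
case: (H m (ltnSn m)) => β Hb; rewrite !take_oversize ?size_tuple // => e.
by have -> : α = β by apply: val_inj.
Qed.

Lemma prod_take m (α : (m.+1).-tuple I) (g : I -> nat) :
  (\prod_(A <- take m α) g A = \prod_(i < m) g (tnth α (widen_ord (leqnSn m) i)))%N.
Proof.
set x0 := tnth α ord0.
rewrite (big_nth x0) size_takel ?size_tuple // big_mkord; apply: eq_bigr => i _.
by rewrite nth_take // (tnth_nth x0).
Qed.

Lemma Nval_lb m (S : {set (m.+1).-tuple I}) α : spanning F Q cov G S -> α \in S ->
  (\prod_(A <- take m α) #|D A| <= Nval S)%N.
Proof.
move=> sp Ha; apply: leq_trans (leq_bigmax_cond _ Ha).
rewrite big_ord_recr /= prod_take.
have pos : (0 < #|Pset S α ord_max|)%N.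
  apply/card_gt0P; exists (tnth α ord0); rewrite /Pset ltnn inE.
  apply/exists_inP; exists α => //.
rewrite (onth_nthE _ (tnth α ord0)); last by rewrite size_tuple.
by set a := tnth α ord0; rewrite {2}/a (tnth_nth a).
apply: leq_trans (leq_pmulr _ pos) _.
rewrite leq_mul2r; apply/orP; right; apply: leq_prod => i _.
apply: subset_leq_card; apply: spanD => //=; by rewrite ltnS.
Qed.

Lemma Nval_ub m (α : (m.+1).-tuple I) : α \in Sadm m.+1 ->
  (\prod_(t < m.+1) #|Pset (Sadm m.+1) α t| <= \prod_(A <- take m α) #|D A| * #|I|)%N.
Proof.
move=> Ha; rewrite big_ord_recr /= prod_take.
apply: leq_mul; last exact: max_card.
apply: leq_prod => i _; apply: subset_leq_card; apply/fintype.subsetP => A.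
have lt : ((widen_ord (leqnSn m) i).+1 < m.+1)%N by rewrite /= ltnS.
rewrite /Pset lt inE => /exists_inP [β Hb /andP [/eqP e1 /eqP e2]].
rewrite inE in Hb; rewrite inD.
set a := tnth α ord0.
have eb : nth a β i = nth a α i.
  by rewrite -(nth_take _ (ltnSn i)) e1 nth_take.
rewrite (tnth_nth a) /= -eb -(@onth_nth _ a _ _ _ e2); apply: sorted_nth => //.
by rewrite size_tuple.
Qed.

Lemma bigmin_le_seq (T : eqType) (r : seq T) (P : pred T) (f : T -> nat) idx j :
  j \in r -> P j -> (\big[minn/idx]_(i <- r | P i) f i <= f j)%N.
Proof.
elim: r => // a r IH; rewrite in_cons big_cons => /orP [/eqP <- -> | jr Pj].
  exact: geq_minl.
case: (P a); last exact: IH.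
exact: leq_trans (geq_minr _ _) (IH jr Pj).
Qed.

Lemma rinv_lb m (α : (m.+1).-tuple I) : sorted adm α ->
  (\prod_(A <- take m α) #|D A| <= r_inv F Q cov G m.+1)%N.
Proof.
move=> sa; rewrite /r_inv.
apply: (big_ind (fun v => \prod_(A <- take m α) #|D A| <= v)%N).
- by apply: (@Nval_lb m _ α (@span_full m.+1 (ltn0Sn m))); rewrite inE.
- by move=> x y hx hy; rewrite leq_min hx hy.
- move=> S /asboolP sp; apply: (@Nval_lb m S α sp); exact: adm_in_span.
Qed.

Lemma rinv_ub m (A0 : I) : exists2 α : (m.+1).-tuple I, sorted adm α &
  (r_inv F Q cov G m.+1 <= \prod_(A <- take m α) #|D A| * #|I|)%N.
Proof.
have le1 : (r_inv F Q cov G m.+1 <= Nval (Sadm m.+1))%N.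
  rewrite /r_inv; apply: bigmin_le_seq; first by rewrite mem_index_enum.
  by apply/asboolP; apply: span_Sadm.
have [β0 sb0 _] := @ext_first m.+1 A0 (ltn0Sn m).
have pos : (0 < #|Sadm m.+1|)%N by apply/card_gt0P; exists β0; rewrite inE.
have [α Ha e] := eq_bigmax_cond (fun α => \prod_(t < m.+1) #|Pset (Sadm m.+1) α t|)%N pos.
exists α; first by rewrite inE in Ha.
apply: leq_trans le1 _; rewrite /Nval e; exact: Nval_ub.
Qed.


Local Notation w := (weight F cov G R).

Lemma ln2_gt0 : 0 < ln (2 : R).
Proof. by apply: ln_gt0; rewrite ltr1n. Qed.

Lemma w_ge0 A : 0 <= w A.
Proof.
rewrite /weight /log2 divr_ge0 ?ln_ge0 ?(ltW ln2_gt0) //.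
by rewrite ler1n D_gt0.
by rewrite ler1n.
Qed.

Lemma log2M (x y : R) : 0 < x -> 0 < y -> log2 (x * y) = log2 x + log2 y.
Proof. by move=> hx hy; rewrite /log2 lnM ?posrE // mulrDl. Qed.

Lemma log2_le (x y : R) : 0 < x -> x <= y -> log2 x <= log2 y.
Proof.
move=> hx hxy; rewrite /log2 ler_pM2r ?invr_gt0 ?ln2_gt0 //.
by rewrite ler_ln ?posrE // (lt_le_trans hx hxy).
Qed.

Lemma log2_prod (s : seq I) :
  log2 ((\prod_(A <- s) #|D A|)%N%:R) = \sum_(A <- s) w A.
Proof.
elim: s => [|a s IH]; first by rewrite !big_nil /log2 ln1 mul0r.
rewrite !big_cons natrM log2M ?IH // ltr0n ?D_gt0 //.
by apply: prodn_gt0 => i; apply: D_gt0.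
Qed.

Lemma sum_le_size (s : seq I) (M : R) : (forall A, w A <= M) ->
  \sum_(A <- s) w A <= (size s)%:R * M.
Proof.
move=> HM; elim: s => [|a s IH]; first by rewrite big_nil mul0r.
rewrite big_cons /= -addn1 natrD mulrDl mul1r addrC; exact: lerD.
Qed.

Lemma uniq_size (s : seq I) : uniq s -> (size s <= #|I|)%N.
Proof. by move/card_uniqP <-; apply: max_card. Qed.

Section Walk.
Variable lam : R.
Hypothesis lam_ge0 : 0 <= lam.
Hypothesis Hlam : forall c, irreducible_seq F cov G c -> \sum_(A <- c) w A <= lam * (size c)%:R.
Variable M : R.
Hypothesis HM : forall A, w A <= M.
Hypothesis M0 : 0 <= M.

Lemma walk_bound (s : seq I) : sorted adm s ->
  \sum_(A <- s) w A <= lam * (size s)%:R + #|I|%:R * M.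
Proof.
have [n] := ubnP (size s); elim: n s => // n IH s /ltnSE le sa.
case Hu: (uniq s).
  have h1 := @sum_le_size s M HM.
  have h2 : (size s)%:R * M <= #|I|%:R * M.
    by rewrite ler_wpM2r // ler_nat uniq_size.
  have h3 : 0 <= lam * (size s)%:R by rewrite mulr_ge0.
  lra.
have [p [x [c [r [e u]]]]] := @decomp _ s (negbT Hu).
rewrite e in sa; case/andP: (@sorted_decomp _ _ p x c r sa) => sa' cy.
have irr : irreducible_seq F cov G (x :: c) by split => //.
have hc := Hlam _ irr.
have sz : size s = (size (p ++ x :: r) + size (x :: c))%N.
  rewrite e !size_cat /= !size_cat /=; lia.
have lt : (size (p ++ x :: r) < n)%N.
  by apply: leq_trans le; rewrite sz /= addnS ltnS leq_addr.
have ih := IH _ lt sa'.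
have es : \sum_(A <- s) w A = \sum_(A <- p ++ x :: r) w A + \sum_(A <- x :: c) w A.
  rewrite e big_cat big_cons big_cat big_cons [in RHS]big_cat !big_cons /=; lra.
rewrite es sz natrD mulrDr; lra.
Qed.

End Walk.


Lemma sumL (c : seq I) q : \sum_(A <- flatten (nseq q c)) w A = q%:R * \sum_(A <- c) w A.
Proof.
elim: q => [|q IH]; first by rewrite big_nil mul0r.
by rewrite /= big_cat IH -addn1 natrD mulrDl mul1r addrC.
Qed.

Lemma sizeL (c : seq I) q : size (flatten (nseq q c)) = (size c * q)%N.
Proof. by rewrite size_flatten /shape map_nseq sumn_nseq. Qed.

Lemma sortedL (x : I) (c : seq I) q : cycle adm (x :: c) -> sorted adm (flatten (nseq q.+1 (x :: c))).
Proof.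
rewrite /= rcons_path => /andP [pc lc].
elim: q => [|q IH]; first by rewrite /= cats0.
move: IH => /= IH; by rewrite cat_path /= pc lc IH.
Qed.

Lemma mean_ge0 c : 0 <= mean_weight F cov G R c.
Proof. by rewrite /mean_weight divr_ge0 ?sumr_ge0 // => A _; apply: w_ge0. Qed.

Lemma cyc_walk (c : seq I) m : irreducible_seq F cov G c ->
  exists2 α : (m.+1).-tuple I, sorted adm α &
    (m%:R - (size c)%:R) * mean_weight F cov G R c <= \sum_(A <- take m α) w A.
Proof.
case: c => [[]//|x c'] [_ [_ cy]]; set c := x :: c'; set k := size c.
have k0 : (0 < k)%N by [].
set s := flatten (nseq m.+1 c).
have szs : (m.+1 <= size s)%N by rewrite sizeL leq_pmull.
have Hs : size (take m.+1 s) == m.+1 by rewrite size_takel.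
exists (Tuple Hs); first by apply: take_sorted; apply: sortedL.
have e0 : take m (Tuple Hs) = take m s.
  by change (take m (take m.+1 s) = take m s); rewrite take_takel.
rewrite e0; clear e0 Hs.
set q := (m %/ k)%N.
have qle : (q <= m.+1)%N by apply: leq_trans (leq_div _ _) (leqnSn _).
have es : s = flatten (nseq q c) ++ flatten (nseq (m.+1 - q) c).
  by rewrite -flatten_cat -nseqD subnKC.
have qk : (size (flatten (nseq q c)) <= m)%N by rewrite sizeL mulnC leq_trunc_div.
rewrite es take_cat ltnNge qk /= big_cat /= sumL.
have h0 : 0 <= \sum_(A <- take (m - size (flatten (nseq q c))) (flatten (nseq (m.+1 - q) c))) w A.
  by apply: sumr_ge0 => A _; apply: w_ge0.
have esum : \sum_(A <- c) w A = k%:R * mean_weight F cov G R c.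
  by rewrite /mean_weight mulrC divfK // pnatr_eq0 -lt0n.
have hm : (m <= q * k + k)%N.
  by rewrite {1}(divn_eq m k) leq_add2l ltnW // ltn_pmod.
have hmR : m%:R - k%:R <= (q * k)%:R :> R.
  by rewrite lerBlDr -natrD ler_nat.
have mg := mean_ge0 c.
rewrite esum mulrA -natrM.
have : (m%:R - k%:R) * mean_weight F cov G R c <= (q * k)%:R * mean_weight F cov G R c.
  by rewrite ler_wpM2r.
lra.
Qed.

Lemma irr_exists (A0 : I) : exists c, irreducible_seq F cov G c.
Proof.
set s := traject sucf A0 (#|I|.+1).
have ss : sorted adm s by rewrite /s trajectS /=; apply: path_traject.
have nu : ~~ uniq s.
  apply/negP => /uniq_size; by rewrite size_traject ltnn.
have [p [x [c [r [e u]]]]] := @decomp _ s nu.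
rewrite e in ss; case/andP: (@sorted_decomp _ _ p x c r ss) => _ cy.
by exists (x :: c).
Qed.

Lemma max_exists (A0 : I) : exists c, irreducible_seq F cov G c /\
  forall c', irreducible_seq F cov G c' -> mean_weight F cov G R c' <= mean_weight F cov G R c.
Proof.
set L := [seq c <- allseqs I #|I| | `[< irreducible_seq F cov G c >]].
have memL c : irreducible_seq F cov G c -> c \in L.
  move=> ic; rewrite mem_filter; apply/andP; split; first exact: asboolT.
  by apply: mem_allseqs; case: ic => _ [u _]; apply: uniq_size.
have [c0 ic0] := irr_exists A0.
have nL : L != [::] by apply: contraTneq (memL _ ic0) => ->.
have [c cL Hc] := @exists_max _ R L (mean_weight F cov G R) nL.
exists c; split; first by move: cL; rewrite mem_filter => /andP [/asboolP].
by move=> c' ic'; apply: Hc; apply: memL.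
Qed.

Lemma main (A0 : I) : exists w0 : R, is_max_mean_weight F cov G w0 /\ h_inv_is F Q cov G w0.
Proof.
have [cs [ics Hcs]] := max_exists A0.
set lam := mean_weight F cov G R cs.
exists lam; split; first by split => //; exists cs.
have lam0 : 0 <= lam := mean_ge0 cs.
set M := \sum_(A : I) w A.
have HM A : w A <= M.
  by rewrite /M (bigD1 A) //= lerDl sumr_ge0 // => B _; apply: w_ge0.
have M0 : 0 <= M by rewrite sumr_ge0 // => B _; apply: w_ge0.
have Hlam c : irreducible_seq F cov G c -> \sum_(A <- c) w A <= lam * (size c)%:R.
  move=> ic; have := Hcs c ic; rewrite /mean_weight ler_pdivrMr //.
  by case: ic; case: c => // a c' _; rewrite ltr0n.
set k := size cs.
set C := #|I|%:R * M + log2 (#|I|%:R).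
have I0 : (0 < #|I|)%N by apply/card_gt0P; exists A0.
have C0 : 0 <= C.
  apply: addr_ge0; first exact: mulr_ge0.
  by rewrite /log2 divr_ge0 // ?ln_ge0 ?ler1n ?(ltW ln2_gt0).
set Dc := (k%:R + 1) * lam + C.
have bounds n : (n%:R - k%:R) * lam <= log2 (r_inv F Q cov G n.+1)%:R <= lam * n%:R + C.
  have [α sa lo] := @cyc_walk cs n ics.
  have rlb := @rinv_lb n α sa.
  have ppos : (0 < \prod_(A <- take n α) #|D A|)%N by apply: prodn_gt0 => A; apply: D_gt0.
  apply/andP; split.
    apply: le_trans lo _; rewrite -log2_prod; apply: log2_le; first by rewrite ltr0n.
    by rewrite ler_nat.
  have [β sb rub] := @rinv_ub n A0.
  have rpos : (0 < r_inv F Q cov G n.+1)%N by apply: leq_trans ppos rlb.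
  have pb : (0 < \prod_(A <- take n β) #|D A|)%N by apply: prodn_gt0 => A; apply: D_gt0.
  have h1 : log2 (r_inv F Q cov G n.+1)%:R <= log2 ((\prod_(A <- take n β) #|D A| * #|I|)%N%:R :> R).
    by apply: log2_le; [rewrite ltr0n | rewrite ler_nat].
  apply: le_trans h1 _.
  rewrite natrM log2M ?ltr0n // log2_prod.
  have := @walk_bound lam lam0 Hlam M HM M0 _ (take_sorted n sb).
  rewrite size_takel ?size_tuple // /C; lra.
rewrite /h_inv_is -cvg_shiftS /=.
have H0 : (fun n => Dc * harmonic n) @ \oo --> (0:R).
  rewrite -(mulr0 Dc); apply: cvgMl_tmp; exact: cvg_harmonic.
apply: (@squeeze_cvgr _ _ _ _ (fun n => lam - Dc * harmonic n) (fun n => lam + Dc * harmonic n)).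
- apply: nearW => n /=.
  have /andP [lo hi] := bounds n.
  set L := log2 _ in lo hi *.
  have hpos : 0 < (n.+1%:R : R) by rewrite ltr0n.
  set h := n.+1%:R^-1.
  have h0 : 0 <= h by rewrite /h invr_ge0 ltW.
  have hn : h * n%:R + h = 1.
    have e : h * n.+1%:R = 1 by rewrite /h mulVf // gt_eqF.
    by rewrite -[in RHS]e -addn1 natrD mulrDr mulr1.
  have hn' : h * n%:R * lam + h * lam = lam by rewrite -mulrDl hn mul1r.
  have p1 : 0 <= h * (L - (n%:R - k%:R) * lam) by rewrite mulr_ge0 // subr_ge0.
  have p2 : 0 <= h * (lam * n%:R + C - L) by rewrite mulr_ge0 // subr_ge0.
  have p3 : 0 <= h * C by rewrite mulr_ge0.
  have p4 : 0 <= h * lam by rewrite mulr_ge0.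
  have p5 : 0 <= h * k%:R * lam.
    by apply: mulr_ge0 => //; apply: mulr_ge0 => //; apply: ler0n.
  rewrite /Dc; apply/andP; split; lra.
- rewrite -[X in _ --> X]subr0; exact: (cvgB (cvg_cst lam) H0).
- rewrite -[X in _ --> X]addr0; exact: (cvgD (cvg_cst lam) H0).
Qed.

End Comb.

Theorem theorem3p2 (R : realType) (X U : Type) (F : X -> U -> set X)
  (Q : set X) (I : finType) (cov : I -> set X) (G : I -> U) :
  is_system F ->
  controlled_invariant F Q ->
  Q !=set0 ->
  quasi_invariant_partition F Q cov G ->
  exists w : R, is_max_mean_weight F cov G w /\ h_inv_is F Q cov G w.
Proof.
move=> [_ [_ HF]] _ [x Qx] HQ.
have [A0 _] : exists A, cov A x.
  by case: HQ => [[_ [_ [Qcov _]]] _]; exact: Qcov.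
exact: (@main R X U F Q I cov G HF HQ A0).
Qed.
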